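(* In the setting described in the context, let $K=\max_{i\in\{1,2\}}\|w^{(i)}_0\|$ and let $T=\sum_{t=1}^N \tau_t$ be the number of updates performed by the Update-by-Disagreement perceptron over $N$ iterations. Then $$\mathbb{E}[T]\;\le\;\frac{3\,(4K+1)}{(1-2\mu)^2}\,\|w^*\|^2,$$ where the expectation is over the random samples $(x_t,y_t)$ and the random label flips $\theta_t$.
   Context: Let $\mathcal{X}=\{x\in\mathbb{R}^d:\|x\|\le 1\}$ and $\mathcal{Y}=\{\pm1\}$. Let $\mathcal{D}$ be a probability distribution over $\mathcal{X}\times\mathcal{Y}$ for which there exists $w^*\in\mathbb{R}^d$ with $\mathcal{D}(\{(x,y): y\langle w^*,x\rangle<1\})=0$. Fix $\mu\in[0,1/2)$. Let $(x_1,y_1),\dots,(x_N,y_N)$ be i.i.d. samples from $\mathcal{D}$, and let $\theta_1,\dots,\theta_N$ be i.i.d. random variables, independent of the samples, with $\Pr[\theta_t=1]=1-\mu$ and $\Pr[\theta_t=-1]=\mu$; the observed (noisy) label is $\tilde y_t=\theta_t y_t$. The Update-by-Disagreement perceptron starts from fixed initial vectors $w^{(1)}_0,w^{(2)}_0\in\mathbb{R}^d$ and for $t=1,\dots,N$ sets $\tau_t=1$ if $\mathrm{sign}(\langle w^{(1)}_{t-1},x_t\rangle)\neq\mathrm{sign}(\langle w^{(2)}_{t-1},x_t\rangle)$ and $\tau_t=0$ otherwise, and then updates $w^{(i)}_t=w^{(i)}_{t-1}+\tau_t\,\tilde y_t\,x_t$ for $i=1,2$. Here $\mathrm{sign}(z)=+1$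 for $z>0$, $-1$ for $z<0$, and its value at $0$ is some fixed convention. *)

(* Defs.v *)
From mathcomp Require Import all_boot all_order all_algebra.
From mathcomp Require Import all_classical all_reals all_analysis.
Set Implicit Arguments. Unset Strict Implicit. Unset Printing Implicit Defensive.
Import Order.TTheory GRing.Theory Num.Theory.
Local Open Scope ring_scope.


Section Perceptron.
Variable R : realType.

Definition dotv (d : nat) (u v : 'rV[R]_d) : R := (\sum_(i < d) u 0 i * v 0 i)%R.
Definition enorm (d : nat) (u : 'rV[R]_d) : R := Num.sqrt (dotv u u).

Definition sgnc (s0 a : R) : R :=
  if (0 < a)%R then 1%R else if (a < 0)%R then (-1)%R else s0.

Definition disagree (s0 : R) (d : nat) (w1 w2 x : 'rV[R]_d) : bool :=
  sgnc s0 (dotv w1 x) != sgnc s0 (dotv w2 x).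

(* Number of updates T made by Update-by-Disagreement on the sequence of
   (sample, theta) pairs s, starting from (w1, w2); X, Y give the
   feature vector and the (clean) label of a sample; the observed label is
   theta * Y z. *)
Fixpoint updates (T : Type) (d : nat) (X : T -> 'rV[R]_d) (Y : T -> R) (s0 : R)
  (w1 w2 : 'rV[R]_d) (s : seq (T * R)) : nat :=
  match s with
  | [::] => 0%N
  | (z, th) :: s' =>
      let t := disagree s0 w1 w2 (X z) in
      let u := if t then (th * Y z) *: X z else 0 in
      (t + updates X Y s0 (w1 + u) (w2 + u) s')%N
  end.

(* Expectation of f over n i.i.d. pairs (z_t, theta_t), z_t ~ D and
   theta_t = 1 w.p. 1-mu, -1 w.p. mu, independent; written as the iterated
   integral over the product distribution (first pair is the head). *)
Fixpoint iid_expect (dm : measure_display) (T : measurableType dm)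
  (D : probability T R) (mu : R) (n : nat) (f : seq (T * R) -> \bar R) : \bar R :=
  match n with
  | 0%N => f [::]
  | n'.+1 => (\int[D]_z
      ((1 - mu)%:E * iid_expect D mu n' (fun s => f ((z, 1%R) :: s))
       + mu%:E * iid_expect D mu n' (fun s => f ((z, (-1)%R) :: s))))%E
  end.

End Perceptron.

(* Main.v *)
Require Import Defs.
From mathcomp Require Import all_boot all_order all_algebra.
From mathcomp Require Import all_classical all_reals all_analysis.
From mathcomp Require Import ring lra.
From mathcomp Require Import measurable_realfun.
Import Order.TTheory GRing.Theory Num.Theory.
Local Open Scope ring_scope.

Section Dot.
Variables (R : realType) (d : nat).
Implicit Types u v w : 'rV[R]_d.

Lemma dotvC u v : dotv u v = dotv v u.
Proof. by rewrite /dotv; apply: eq_bigr => i _; rewrite mulrC. Qed.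

Lemma dotvDl u v w : dotv (u + v) w = dotv u w + dotv v w.
Proof. by rewrite /dotv -big_split; apply: eq_bigr => i _; rewrite !mxE mulrDl. Qed.

Lemma dotvBl u v w : dotv (u - v) w = dotv u w - dotv v w.
Proof. by rewrite /dotv -sumrB; apply: eq_bigr => i _; rewrite !mxE mulrBl. Qed.

Lemma dotvZl k u w : dotv (k *: u) w = k * dotv u w.
Proof. by rewrite /dotv mulr_sumr; apply: eq_bigr => i _; rewrite !mxE mulrA. Qed.

Lemma dotvDr u v w : dotv w (u + v) = dotv w u + dotv w v.
Proof. by rewrite dotvC dotvDl !(dotvC w). Qed.

Lemma dotvZr k u w : dotv w (k *: u) = k * dotv w u.
Proof. by rewrite dotvC dotvZl dotvC. Qed.

Lemma dotvBr u v w : dotv w (u - v) = dotv w u - dotv w v.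
Proof. by rewrite dotvC dotvBl !(dotvC w). Qed.

Lemma dotv_ge0 u : 0 <= dotv u u.
Proof. by apply: sumr_ge0 => i _; rewrite -expr2 sqr_ge0. Qed.

Lemma dotv0 u v : dotv u u = 0 -> dotv u v = 0.
Proof.
move=> h; have h2 := h; move: h2; rewrite /dotv => /psumr_eq0P H.
have {}H := H (fun i _ => ltac:(by rewrite -expr2 sqr_ge0)).
apply: big1 => i _; have := H i isT.
by move/eqP; rewrite mulf_eq0 orbb => /eqP->; rewrite mul0r.
Qed.

Lemma CS u v : dotv u v ^+ 2 <= dotv u u * dotv v v.
Proof.
have [z|pos] := eqVneq (dotv u u) 0.
  by rewrite (@dotv0 u v z) z expr0n mul0r.
have uu0 : 0 < dotv u u by rewrite lt_def pos dotv_ge0.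
set P := dotv u u *: v - dotv u v *: u.
have := dotv_ge0 P.
rewrite /P !dotvBl !dotvZl !dotvBr !dotvZr (dotvC v u).
move=> H.
have : 0 <= dotv u u * (dotv u u * dotv v v - dotv u v ^+ 2).
  by move: H; congr (_ <= _); ring.
by rewrite pmulr_rge0 // subr_ge0.
Qed.
End Dot.
Arguments dotvC {R d}. Arguments dotvDl {R d}. Arguments dotvBl {R d}. Arguments dotvZl {R d}.
Arguments dotvDr {R d}. Arguments dotvZr {R d}. Arguments dotvBr {R d}. Arguments dotv_ge0 {R d}.
Arguments dotv0 {R d}. Arguments CS {R d}.

Section Meas.
Context d (T : measurableType d) (R : realType).
Local Open Scope ereal_scope.
Import HBNNSimple.

Lemma int_le_ae (mu : {measure set T -> \bar R}) (N : set T) (f : T -> \bar R) (c : R) :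
  measurable N -> mu N = 0 -> (0 <= c)%R -> (forall x, 0 <= f x) ->
  (forall x, ~ N x -> f x <= c%:E) ->
  \int[mu]_x f x <= c%:E * mu setT.
Proof.
move=> mN N0 c0 f0 fc.
rewrite ge0_integralTE //=.
apply: ge_ereal_sup => _ [h /= hf <-].
rewrite -integralT_nnsfun.
rewrite (ge0_negligible_integral mN _ _ _ N0) //; last 2 first.
  by apply/measurable_EFinP; exact: (@measurable_funPT _ _ _ _ h).
  by move=> x _; rewrite lee_fin.
apply: (@le_trans _ _ (\int[mu]_(x in setT `\` N) (cst c%:E) x)).
  apply: ge0_le_integral => //.
  - exact: measurableD.
  - by move=> x _; rewrite lee_fin.
  - by apply/measurable_EFinP; apply: measurable_funS (@measurable_funPT _ _ _ _ h).
  - by move=> x [_ Nx]; apply: le_trans (hf x) (fc x Nx).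
rewrite integral_cst; last exact: measurableD.
by apply: lee_wpmul2l; rewrite ?lee_fin //; apply: le_measure; rewrite ?inE //; apply: measurableD.
Qed.
End Meas.

Section Meas2.
Context dm (T : measurableType dm) (R : realType) (d : nat).

Lemma bad_meas (X : T -> 'rV[R]_d) (Y : T -> R) (w : 'rV[R]_d) :
  (forall i : 'I_d, measurable_fun setT (fun z : T => X z 0 i)) ->
  measurable_fun setT Y ->
  measurable [set z : T | Y z * dotv w (X z) < 1]%classic.
Proof.
move=> mX mY.
have mg : measurable_fun setT (fun z => Y z * dotv w (X z)).
  apply: measurable_funM => //; rewrite /dotv.
  apply: measurable_sum => i; apply: measurable_funM => //; exact: measurable_cst.
have H := measurable_fun_ltr mg (measurable_cst (1:R)) measurableT.
have : measurable [set true]%classic by [].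
move/H.
rewrite setTI; exact.
Qed.
End Meas2.

Section Real.
Variable R : realType.

Lemma sqrt_conc (Z G : R) : 0 <= Z -> 0 <= G -> 2 * G * Num.sqrt Z <= G ^+ 2 + Z.
Proof.
move=> Z0 G0; have := sqr_sqrtr Z0; have := sqrtr_ge0 Z.
set u := Num.sqrt Z => u0 uZ; rewrite -uZ.
have : 0 <= (u - G) ^+ 2 by apply: sqr_ge0.
move=> h; nra.
Qed.

Lemma core_real (mu W K S A sig be r y m G s1 s2 : R) :
  0 <= mu -> mu < 1/2 -> 1 <= W -> 0 <= K -> 0 <= r -> r <= 1 -> y ^+ 2 = 1 ->
  1 <= y * be -> y * sig <= 2 * K -> 0 <= S ->
  m = W * (4 * (1 - 2 * mu) * K + 2) / (1 - 2 * mu) ->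
  G = Num.sqrt (m ^+ 2 + S) ->
  s1 = Num.sqrt (m ^+ 2 + S + 4 * y * sig + 4 * r) ->
  s2 = Num.sqrt (m ^+ 2 + S - 4 * y * sig + 4 * r) ->
  0 <= m ^+ 2 + S + 4 * y * sig + 4 * r ->
  0 <= m ^+ 2 + S - 4 * y * sig + 4 * r ->
  1 + (1 - mu) * ((W * s1 - (A + 2 * y * be)) / (1 - 2 * mu))
    + mu * ((W * s2 - (A - 2 * y * be)) / (1 - 2 * mu))
  <= (W * G - A) / (1 - 2 * mu).
Proof.
move=> mu0 mu2 W1 K0 r0 r1 y2 yb ys S0 hm hG h1 h2 p1 p2.
set a := 1 - 2 * mu.
have a0 : 0 < a by rewrite /a; lra.
have a1 : a <= 1 by rewrite /a; lra.
set L := 4 * a * K + 2.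
have aK : 0 <= a * K by apply: mulr_ge0; lra.
have L0 : 0 < L by rewrite /L -mulrA; lra.
have am : a * m = W * L by rewrite hm /L /a; field; rewrite -/a; lra.
have m0 : 0 <= m.
  rewrite hm; apply: divr_ge0; last lra.
  apply: mulr_ge0; first lra. rewrite -/a; lra.
have mpos : 0 < m.
  have : 0 < W * L by apply: mulr_gt0; lra.
  rewrite -am => h; rewrite lt_def; apply/andP; split => //.
  by apply/eqP => m00; move: h; rewrite m00 mulr0 ltxx.
have G2 : G ^+ 2 = m ^+ 2 + S by rewrite hG sqr_sqrtr //; apply: addr_ge0 => //; exact: sqr_ge0.
have Gm : m <= G.
  have h : m ^+ 2 <= m ^+ 2 + S by lra.
  by have := ler_wsqrtr h; rewrite sqrtr_sqr ger0_norm // -hG.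
have c1 := sqrt_conc _ _ p1 (le_trans m0 Gm).
have c2 := sqrt_conc _ _ p2 (le_trans m0 Gm).
rewrite -h1 G2 in c1; rewrite -h2 G2 in c2.
have E : 2 * G * ((1 - mu) * s1 + mu * s2 - G) <= 2 * L.
  have : (1 - mu) * (2 * G * s1) + mu * (2 * G * s2) <=
         (1 - mu) * (G ^+ 2 + (m ^+ 2 + S + 4 * y * sig + 4 * r))
         + mu * (G ^+ 2 + (m ^+ 2 + S - 4 * y * sig + 4 * r)).
    apply: lerD; apply: ler_wpM2l => //; lra.
  rewrite G2 /L /a; nra.
have WD : W * ((1 - mu) * s1 + mu * s2 - G) <= a.
  set D := (1 - mu) * s1 + mu * s2 - G.
  have Gp : 0 < G by lra.
  have h : G * D <= L by move: E; rewrite -/D -mulrA; lra.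
  have : a * G * (W * D) <= a * G * a.
    have -> : a * G * (W * D) = a * W * (G * D) by ring.
    have : a * W * (G * D) <= a * W * L by apply: ler_wpM2l => //; apply: mulr_ge0; lra.
    move=> hh; apply: (le_trans hh).
    have -> : a * W * L = a * (W * L) by ring.
    rewrite -am.
    have : a * (a * m) <= a * (a * G) by apply: ler_wpM2l; [lra | apply: ler_wpM2l; lra].
    move=> h3; apply: (le_trans h3); rewrite le_eqVlt; apply/orP; left; apply/eqP; ring.
  by rewrite ler_pM2l //; apply: mulr_gt0.
have ayb : a <= a * (y * be) by rewrite -{1}(mulr1 a); apply: ler_wpM2l; lra.
rewrite -subr_ge0.
have -> : (W * G - A) / a -
  (1 + (1 - mu) * ((W * s1 - (A + 2 * y * be)) / a) + mu * ((W * s2 - (A - 2 * y * be)) / a))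
  = (2 * (a * (y * be)) - a - W * ((1 - mu) * s1 + mu * s2 - G)) / a.
  rewrite /a; field; rewrite -/a; lra.
apply: divr_ge0; lra.
Qed.
End Real.

Lemma sgn_disagree (R : realType) (s0 p q : R) : sgnc s0 p != sgnc s0 q -> p * q <= 0.
Proof.
move=> H; rewrite leNgt; apply/negP => pq; move: H; rewrite /sgnc.
by case: (ltrgtP 0 p) => hp; case: (ltrgtP 0 q) => hq; rewrite ?eqxx //; nra.
Qed.

Section Main.
Variables (R : realType) (d : nat) (wstar : 'rV[R]_d) (mu K s0 : R).

Definition mm := enorm wstar * (4 * (1 - 2 * mu) * K + 2) / (1 - 2 * mu).
Definition V (w1 w2 : 'rV[R]_d) :=
  (enorm wstar * Num.sqrt (mm ^+ 2 + dotv (w1 + w2) (w1 + w2)) - dotv wstar (w1 + w2))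
  / (1 - 2 * mu).

Lemma nextsum (w1 w2 x : 'rV[R]_d) k : (w1 + k *: x) + (w2 + k *: x) = (w1 + w2) + (k + k) *: x.
Proof. by rewrite addrACA scalerDl. Qed.

Lemma core_vec (w1 w2 x : 'rV[R]_d) (y : R) :
  0 <= mu -> mu < 1/2 -> 1 <= enorm wstar -> 0 <= K ->
  dotv x x <= 1 -> (y = 1 \/ y = -1) -> 1 <= y * dotv wstar x ->
  dotv (w1 - w2) x ^+ 2 <= 4 * K ^+ 2 ->
  (disagree s0 w1 w2 x)%:R
  + (1 - mu) * V (w1 + (if disagree s0 w1 w2 x then (1 * y) *: x else 0))
                 (w2 + (if disagree s0 w1 w2 x then (1 * y) *: x else 0))
  + mu * V (w1 + (if disagree s0 w1 w2 x then (-1 * y) *: x else 0))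
           (w2 + (if disagree s0 w1 w2 x then (-1 * y) *: x else 0))
  <= V w1 w2.
Proof.
move=> mu0 mu2 W1 K0 x1 hy yb hc.
case: ifP => ht; last first.
  by rewrite !addr0 /=; rewrite le_eqVlt; apply/orP; left; apply/eqP; ring.
have y2 : y ^+ 2 = 1 by case: hy => ->; rewrite ?expr1n //; rewrite sqrrN expr1n.
have pq := @sgn_disagree R _ _ _ ht.
set p := dotv w1 x in pq; set q := dotv w2 x in pq.
have hc' : (p - q) ^+ 2 <= 4 * K ^+ 2 by rewrite /p /q -dotvBl.
set s := w1 + w2.
have sig : dotv s x = p + q by rewrite /s dotvDl.
have ys : y * dotv s x <= 2 * K.
  rewrite sig.
  have : (y * (p + q)) ^+ 2 <= 4 * K ^+ 2 by rewrite exprMn y2 mul1r; nra.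
  move=> h; nra.
rewrite /V !nextsum -/s.
have eQ : forall (v : 'rV[R]_d) k, dotv (v + (k + k) *: x) (v + (k + k) *: x)
    = dotv v v + 4 * k * dotv v x + 4 * k ^+ 2 * dotv x x.
  by move=> v k; rewrite !dotvDl !dotvDr !dotvZl !dotvZr (dotvC x v); ring.
have eA : forall (v : 'rV[R]_d) k, dotv wstar (v + (k + k) *: x) = dotv wstar v + 2 * k * dotv wstar x.
  by move=> v k; rewrite dotvDr dotvZr; ring.
rewrite !eQ !eA.
have -> : 4 * (1 * y) ^+ 2 = 4 by rewrite mul1r y2 mulr1.
have -> : 4 * (-1 * y) ^+ 2 = 4 by rewrite mulN1r sqrrN y2 mulr1.
have -> : 4 * (-1 * y) * dotv s x = - (4 * y * dotv s x) by ring.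
have -> : 2 * (-1 * y) * dotv wstar x = - (2 * y * dotv wstar x) by ring.
rewrite ?mul1r ?mulr1 !addrA.
rewrite -[_ + - (2 * _ * _)]/(_ - _).
have p0 : forall k, 0 <= mm ^+ 2 + dotv (s + (k + k) *: x) (s + (k + k) *: x).
  move=> k; apply: addr_ge0; [exact: sqr_ge0 | exact: dotv_ge0].
have p1 := p0 (1 * y); have p2 := p0 (-1 * y).
rewrite eQ in p1; rewrite eQ in p2.
have -> : (true%:R : R) = 1 by [].
apply: (@core_real R mu (enorm wstar) K _ _ _ _ _ y mm _ _ _ mu0 mu2 W1 K0 (dotv_ge0 x) x1 y2 yb ys
  (dotv_ge0 s) erefl erefl erefl erefl).
- by move: p1; rewrite mul1r y2 mulr1 !addrA.
- move: p2; rewrite mulN1r sqrrN y2 mulr1 !addrA.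
  by have -> : 4 * - y * dotv s x = - (4 * y * dotv s x) by ring.
Qed.
End Main.

Lemma le_sqrt_bound (R : realType) (A W Z : R) :
  0 <= W -> 0 <= Z -> A ^+ 2 <= W ^+ 2 * Z -> A <= W * Num.sqrt Z.
Proof.
move=> W0 Z0 h; have := sqr_sqrtr Z0; have := sqrtr_ge0 Z.
set u := Num.sqrt Z => u0 uZ; rewrite -uZ in h.
have Wu : 0 <= W * u by apply: mulr_ge0.
rewrite -exprMn in h; nra.
Qed.

Lemma V_ge0 (R : realType) (d : nat) (wstar : 'rV[R]_d) (mu K : R) (w1 w2 : 'rV[R]_d) :
  mu < 1/2 -> 0 <= @V R d wstar mu K w1 w2.
Proof.
move=> mu2; rewrite /V; apply: divr_ge0; last lra.
rewrite subr_ge0.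
set s := w1 + w2.
have W0 : 0 <= enorm wstar by apply: sqrtr_ge0.
apply: le_sqrt_bound => //.
  by apply: addr_ge0; [exact: sqr_ge0 | exact: dotv_ge0].
rewrite /enorm sqr_sqrtr ?dotv_ge0 //.
apply: (le_trans (CS wstar s)); apply: ler_wpM2l; first exact: dotv_ge0.
by rewrite lerDr sqr_ge0.
Qed.

Section Ind.
Local Open Scope ereal_scope.
Context (R : realType) (dm : measure_display) (T : measurableType dm) (D : probability T R).

Lemma iid_expect_ge0 (mu : R) n : (0 <= mu)%R -> (mu <= 1)%R -> forall f,
  (forall s, 0 <= f s) -> 0 <= iid_expect D mu n f.
Proof.
move=> mu0 mu1; elim: n => [|n IH] f f0 //=.
apply: integral_ge0 => z _; apply: adde_ge0; apply: mule_ge0;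
  rewrite ?lee_fin ?subr_ge0 //; apply: IH => s; exact: f0.
Qed.

Variables (d : nat) (X : T -> 'rV[R]_d) (Y : T -> R) (wstar : 'rV[R]_d) (mu K s0 : R) (c0 : 'rV[R]_d).
Hypotheses (mu0 : (0 <= mu)%R) (mu2 : (mu < 1/2)%R) (W1 : (1 <= enorm wstar)%R) (K0 : (0 <= K)%R).
Hypothesis hX : forall z, (dotv (X z) (X z) <= 1)%R.
Hypothesis hY : forall z, Y z = 1%R \/ Y z = (-1)%R.
Hypothesis mbad : measurable [set z : T | Y z * dotv wstar (X z) < 1]%R%classic.
Hypothesis Dbad : D [set z : T | Y z * dotv wstar (X z) < 1]%R%classic = 0.
Hypothesis hc0 : forall z, (dotv c0 (X z) ^+ 2 <= 4 * K ^+ 2)%R.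

Lemma ind n : forall (w1 w2 : 'rV[R]_d) (e : R) (f : seq (T * R) -> \bar R),
  (w1 - w2 = c0)%R -> (0 <= e)%R ->
  (forall s, f s = (e + (updates X Y s0 w1 w2 s)%:R)%R%:E) ->
  iid_expect D mu n f <= (e + @V R d wstar mu K w1 w2)%R%:E.
Proof.
have mu1 : (mu <= 1)%R.
  apply: (le_trans (ltW mu2)); rewrite ler_pdivrMr // mul1r ler1n //.

elim: n => [|n IH] w1 w2 e f hw e0 hf.
  by rewrite /= hf /= lee_fin addr0 lerDl V_ge0.
rewrite /=.
apply: le_trans; first apply: (@int_le_ae _ _ _ D _ _ (e + @V R d wstar mu K w1 w2)%R mbad Dbad).
- by apply: addr_ge0 => //; apply: V_ge0.
- move=> z; apply: adde_ge0; apply: mule_ge0; rewrite ?lee_fin ?subr_ge0 //;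
    apply: iid_expect_ge0 => // s; rewrite hf lee_fin; apply: addr_ge0 => //.
- move=> z /negP; rewrite -leNgt => yb.
  set t := disagree s0 w1 w2 (X z).
  have hw' : forall u : 'rV[R]_d, ((w1 + u) - (w2 + u))%R = c0.
    by move=> u; rewrite opprD addrACA subrr addr0.
  have et : (0 <= e + t%:R)%R by apply: addr_ge0.
  have IH1 := IH _ _ (e + t%:R)%R (fun s => f ((z, 1%R) :: s))
    (hw' (if t then (1 * Y z) *: X z else 0)%R) et
    (fun s => ltac:(by rewrite /= hf /= natrD addrA)).
  have IH2 := IH _ _ (e + t%:R)%R (fun s => f ((z, (-1)%R) :: s))
    (hw' (if t then (-1 * Y z) *: X z else 0)%R) et
    (fun s => ltac:(by rewrite /= hf /= natrD addrA)).
  apply: le_trans.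
    apply: leeD; apply: lee_wpmul2l; [| exact: IH1 | | exact: IH2];
    rewrite lee_fin ?subr_ge0 //.
  rewrite -!EFinM -EFinD lee_fin.
  have hcv := @core_vec R d wstar mu K s0 w1 w2 (X z) (Y z) mu0 mu2 W1 K0 (hX z) (hY z) yb
    (ltac:(by rewrite hw; exact: hc0)).
  rewrite -/t in hcv.
  set V1 := V _ _ _ _ _ (w1 + (if t then _ else _)) _ in hcv *.
  set V2 := V _ _ _ _ _ (w1 + (if t then _ else _)) _ in hcv *.
  have -> : ((1 - mu) * (e + t%:R + V1) + mu * (e + t%:R + V2))%R
    = (e + (t%:R + (1 - mu) * V1 + mu * V2))%R by ring.
  by rewrite lerD2l.
- rewrite le_eqVlt; apply/orP; left; apply/eqP; rewrite -[RHS]mule1; congr (_ * _); exact: probability_setT.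
Qed.
End Ind.

Lemma final_real (R : realType) (mu W K G A m : R) :
  0 <= mu -> mu < 1/2 -> 1 <= W -> 0 <= K ->
  m = W * (4 * (1 - 2 * mu) * K + 2) / (1 - 2 * mu) ->
  G <= m + 2 * K -> - A <= 2 * K * W ->
  (W * G - A) / (1 - 2 * mu) <= 3 * (4 * K + 1) / (1 - 2 * mu) ^+ 2 * W ^+ 2.
Proof.
move=> mu0 mu2 W1 K0 hm hG hA.
set a := 1 - 2 * mu in hm *.
have a0 : 0 < a by rewrite /a; lra.
have a1 : a <= 1 by rewrite /a; lra.
have h1 : (W * G - A) / a <= (W * (m + 2 * K) + 2 * K * W) / a.
  rewrite ler_pM2r ?invr_gt0 //; have : W * G <= W * (m + 2 * K).
    by apply: ler_wpM2l => //; lra.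
  lra.
apply: (le_trans h1); rewrite hm -subr_ge0.
have -> : 3 * (4 * K + 1) / a ^+ 2 * W ^+ 2 -
  (W * (W * (4 * a * K + 2) / a + 2 * K) + 2 * K * W) / a
  = (3 * (4 * K + 1) * W ^+ 2 - W ^+ 2 * (4 * a * K + 2) - 4 * a * K * W) / a ^+ 2.
  by field; lra.
apply: divr_ge0; last exact: sqr_ge0.
have e1 : a * K * W <= K * W.
  by rewrite -mulrA ler_piMl //; apply: mulr_ge0; lra.
have e2 : K * W <= K * W ^+ 2.
  by rewrite expr2 mulrA ler_peMr //; apply: mulr_ge0; lra.
have e3 : a * K * W ^+ 2 <= K * W ^+ 2.
  by rewrite -mulrA ler_piMl //; apply: mulr_ge0 => //; exact: sqr_ge0.
have e4 : 1 <= W ^+ 2 by nra.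
nra.
Qed.

Theorem theorem1 (R : realType) (d : nat) (dm : measure_display)
  (T : measurableType dm) (D : probability T R)
  (X : T -> 'rV[R]_d) (Y : T -> R) (wstar : 'rV[R]_d) (mu : R)
  (w10 w20 : 'rV[R]_d) (s0 : R) (N : nat) :
  (forall i : 'I_d, measurable_fun setT (fun z : T => X z 0 i)) ->
  measurable_fun setT Y ->
  (forall z : T, enorm (X z) <= 1) ->
  (forall z : T, Y z = 1 \/ Y z = -1) ->
  D [set z : T | Y z * dotv wstar (X z) < 1]%classic = 0%E ->
  0 <= mu -> mu < 1 / 2 ->
  let K := Num.max (enorm w10) (enorm w20) in
  (iid_expect D mu N (fun s => ((updates X Y s0 w10 w20 s)%:R)%:E)
   <= ((3 * (4 * K + 1)) / (1 - 2 * mu) ^+ 2 * enorm wstar ^+ 2)%:E)%E.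
Proof.
move=> mX mY hXn hY Dbad mu0 mu2; cbv zeta.
set K := Num.max (enorm w10) (enorm w20).
have mbad := @bad_meas dm T R d X Y wstar mX mY.
have hX : forall z, dotv (X z) (X z) <= 1.
  move=> z; have := hXn z; rewrite /enorm => h.
  rewrite -(sqr_sqrtr (dotv_ge0 (X z))); have := sqrtr_ge0 (dotv (X z) (X z)); nra.
have n1K : enorm w10 <= K by rewrite /K le_max lexx.
have n2K : enorm w20 <= K by rewrite /K le_max lexx orbT.
have n10 : 0 <= enorm w10 by apply: sqrtr_ge0.
have n20 : 0 <= enorm w20 by apply: sqrtr_ge0.
have K0 : 0 <= K by apply: le_trans n1K.
have W0 : 0 <= enorm wstar by apply: sqrtr_ge0.
have en2 : forall v : 'rV[R]_d, enorm v ^+ 2 = dotv v v.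
  by move=> v; rewrite /enorm sqr_sqrtr // dotv_ge0.
have cs : forall u v : 'rV[R]_d, dotv u v <= enorm u * enorm v.
  move=> u v; apply: le_sqrt_bound; [exact: sqrtr_ge0 | exact: dotv_ge0 |].
  by rewrite en2; exact: CS.
have csN : forall u v : 'rV[R]_d, - dotv u v <= enorm u * enorm v.
  move=> u v; apply: le_sqrt_bound; [exact: sqrtr_ge0 | exact: dotv_ge0 |].
  by rewrite sqrrN en2; exact: CS.
have W1 : 1 <= enorm wstar.
  have [z hz] : exists z, ~ (Y z * dotv wstar (X z) < 1).
    apply: contrapT => H.
    have hb : [set z : T | Y z * dotv wstar (X z) < 1]%classic = setT.
      apply/seteqP; split => // z _; apply: contrapT => hz; apply: H; exists z; exact: hz.
    move: Dbad; rewrite hb probability_setT => /eqP; rewrite onee_eq0.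
    by [].
  move/negP: hz; rewrite -leNgt => yb.
  have y2 : Y z ^+ 2 = 1 by case: (hY z) => ->; rewrite ?expr1n // sqrrN expr1n.
  have h1 : 1 <= dotv wstar (X z) ^+ 2.
    have : 1 <= (Y z * dotv wstar (X z)) ^+ 2 by nra.
    by rewrite exprMn y2 mul1r.
  have h2 := CS wstar (X z).
  have h3 : dotv wstar (X z) ^+ 2 <= enorm wstar ^+ 2.
    rewrite en2; apply: (le_trans h2); rewrite -{2}(mulr1 (dotv wstar wstar)).
    by apply: ler_wpM2l; [exact: dotv_ge0 | exact: hX].
  nra.
set c0 := w10 - w20.
have hc0 : forall z, dotv c0 (X z) ^+ 2 <= 4 * K ^+ 2.
  move=> z; apply: (le_trans (CS c0 (X z))).
  have cc : dotv c0 c0 <= 4 * K ^+ 2.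
    have := csN w10 w20.
    rewrite /c0 dotvBl !dotvBr (dotvC w20 w10) -!en2; nra.
  have := dotv_ge0 c0; have := hX z; have := dotv_ge0 (X z); nra.
have := @ind R dm T D d X Y wstar mu K s0 c0 mu0 mu2 W1 K0 hX hY mbad Dbad hc0 N w10 w20 0
  (fun s => ((updates X Y s0 w10 w20 s)%:R)%:E) erefl (lexx 0)
  (fun s => ltac:(by rewrite add0r)).
move/le_trans; apply; rewrite add0r lee_fin /V.
apply: final_real => //.
- set S := dotv (w10 + w20) (w10 + w20).
  have S0 : 0 <= S by exact: dotv_ge0.
  have SK : S <= 4 * K ^+ 2.
    have := cs w10 w20.
    rewrite /S dotvDl !dotvDr (dotvC w20 w10) -!en2; nra.
  have m0 : 0 <= @mm R d wstar mu K.
    rewrite /mm; apply: divr_ge0; last lra.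
    apply: mulr_ge0 => //; have : 0 <= (1 - 2 * mu) * K by apply: mulr_ge0 => //; lra.
    rewrite -mulrA; lra.
  have : @mm R d wstar mu K ^+ 2 + S <= (@mm R d wstar mu K + 2 * K) ^+ 2 by nra.
  by move/ler_wsqrtr; rewrite sqrtr_sqr ger0_norm //; apply: addr_ge0 => //; lra.
- set s := w10 + w20.
  have hS : dotv s s <= 4 * K ^+ 2.
    have := cs w10 w20.
    rewrite /s dotvDl !dotvDr (dotvC w20 w10) -!en2; nra.
  have hs : enorm s <= 2 * K.
    have : enorm s ^+ 2 <= (2 * K) ^+ 2 by rewrite en2; nra.
    have : 0 <= enorm s by apply: sqrtr_ge0.
    nra.
  apply: (le_trans (csN wstar s)).
  rewrite mulrC; apply: ler_wpM2r => //.
Qed.
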